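(* Let $G$ be a finite group, $p$ an odd prime, and $A=\langle a\rangle$ a cyclic subgroup of $G$ of order $p^n$. Let $\eta\in\mathrm{Aut}(G)$. The following are equivalent: (1) there is a relative gamma function $\gamma:A\to\mathrm{Aut}(G)$ with $\gamma(a)=\eta$; (2) $A$ is $\eta$-invariant and the order of $\eta$ divides $p^n$. When these hold, such a $\gamma$ is unique.
   Context: Maps act on the right, written exponentially. For $A\le G$, a function $\gamma:A\to\mathrm{Aut}(G)$ is a relative gamma function on $A$ if $\gamma(g^{\gamma(h)}h)=\gamma(g)\gamma(h)$ for all $g,h\in A$ and $a^{\gamma(b)}\in A$ for all $a,b\in A$. *)

(* Defs.v *)
From mathcomp Require Import all_boot all_fingroup.
Set Implicit Arguments. Unset Strict Implicit. Unset Printing Implicit Defensive.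
Local Open Scope group_scope.

(* Automorphisms of G are permutations of gT in [Aut G] (identity off G).
   Maps act on the right: x^{gamma h} is (gamma h) x, and MathComp's
   permutation product (s * t) x = t (s x) matches the right-action
   composition gamma(g) gamma(h). *)
Definition rel_gamma (gT : finGroupType) (G A : {set gT})
  (gamma : gT -> {perm gT}) : Prop :=
  [/\ {in A, forall x, gamma x \in Aut G},
      {in A &, forall g h, gamma (gamma h g * h) = gamma g * gamma h} &
      {in A &, forall x y, gamma y x \in A}].

(* Main.v *)
Require Import Defs.
From mathcomp Require Import all_boot all_fingroup all_solvable.
From mathcomp Require Import zify ring.

Definition sq (r k : nat) : nat := iter k (fun s => r * s + 1) 0.

Lemma sqS r k : sq r k.+1 = r * sq r k + 1. Proof. by []. Qed.

Lemma sqD r i j : sq r (i + j) = r ^ j * sq r i + sq r j.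
Proof.
elim: j => [|j IH]; first by rewrite addn0 expn0 mul1n addn0.
by rewrite addnS !sqS IH expnS; ring.
Qed.

Lemma sqM r m j : sq r (j * m) = sq r m * sq (r ^ m) j.
Proof.
elim: j => [|j IH]; first by rewrite mul0n muln0.
by rewrite mulSnr sqD IH sqS; ring.
Qed.

Lemma pow_exp x j : exists e, (1 + x) ^ j = 1 + j * x + x ^ 2 * e.
Proof.
elim: j => [|j [e IH]]; first by exists 0; rewrite expn0 !mul0n muln0.
exists (j + e + x * e); rewrite expnS IH; ring.
Qed.

Lemma sq_exp x j : exists f, sq (1 + x) j = j + x * 'C(j, 2) + x ^ 2 * f.
Proof.
elim: j => [|j [f IH]]; first by exists 0; rewrite bin0n !muln0.
exists ('C(j, 2) + f + x * f); rewrite sqS IH binS bin1; ring.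
Qed.

Lemma L1 p r (pr : prime p) (op : odd p) w0 (hr : r = 1 + p * w0) k :
  exists u w, sq r (p ^ k) = p ^ k * (1 + p * u) /\ r ^ (p ^ k) = 1 + p ^ k.+1 * w.
Proof.
elim: k => [|k [u [w [Hs Hr]]]].
  by exists 0, w0; rewrite expn0 expn1 /= hr; split; ring.
have p3 : 2 < p.
  have := prime_gt1 pr; move: op; case: (p) => [|[|[|q]]] //.
have [c Hc] : exists c, 'C(p, 2) = p * c.
  have /dvdnP [c Hc] : p %| 'C(p, 2) by apply: prime_dvd_bin.
  by exists c; rewrite Hc mulnC.
set y := p ^ k * w.
have Hx : r ^ (p ^ k) = 1 + p * y by rewrite Hr /y expnS; ring.
have [e He] := pow_exp (p * y) p.
have [f Hf] := sq_exp (p * y) p.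
exists (u + (y * c + y * y * f) + p * u * (y * c + y * y * f)), (w * (1 + y * e)).
rewrite expnSr; split.
  rewrite [p ^ k * p]mulnC sqM Hx Hs Hf Hc /y; ring.
rewrite expnM Hx He /y.
by rewrite !expnS; ring.
Qed.

Section Orb.
Variables (p r n w0 : nat).
Hypotheses (pr : prime p) (op : odd p) (hr : r = 1 + p * w0).
Let N := (p ^ n)%N.

Lemma L2a : N %| sq r N.
Proof. by have [u [w [-> _]]] := L1 p r pr op w0 hr n; apply: dvdn_mulr. Qed.

Lemma L2b k : k < n -> ~~ (N %| sq r (p ^ k)).
Proof.
move=> kn; have [u [w [-> _]]] := L1 p r pr op w0 hr k.
apply/negP => H.
have H1 : p ^ k.+1 %| p ^ k * (1 + p * u).
  by apply: dvdn_trans H; rewrite dvdn_exp2l.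
rewrite mulnDr muln1 dvdn_addl in H1; last by rewrite mulnA -expnSr dvdn_mulr.
have := dvdn_leq _ H1; rewrite expn_gt0 prime_gt0 //=; rewrite leq_exp2l ?prime_gt1 //.
by rewrite ltnn => /(_ isT).
Qed.

Let P x := N %| sq r x.

Lemma PD x y : P x -> P (x + y) = P y.
Proof. by move=> Px; rewrite /P sqD dvdn_addr // dvdn_mull. Qed.

Lemma PM c x : P x -> P (c * x).
Proof.
move=> Px; elim: c => [|c IH]; first by rewrite mul0n /P dvdn0.
by rewrite mulSn PD.
Qed.

Lemma Pdvd d : P d -> N %| d.
Proof.
case: d => [|d] Pd; first by rewrite dvdn0.
have [km kn Hk _] := egcdnP N (ltn0Sn d).
have H1 : P (kn * N + gcdn d.+1 N).
  by rewrite -Hk; apply: PM.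
rewrite PD in H1; last by apply: PM; apply: L2a.
have /(dvdn_pfactor _ _ pr) [k kn' Hg] : gcdn d.+1 N %| N by apply: dvdn_gcdr.
move: kn'; rewrite leq_eqVlt => /orP [/eqP ek|kn'].
  by rewrite /N -ek -Hg dvdn_gcdl.
by move: H1; rewrite /P Hg (negbTE (L2b _ kn')).
Qed.

End Orb.


Local Open Scope group_scope.
Definition bs (gT : finGroupType) (eta : {perm gT}) (a : gT) k :=
  iter k (fun x => eta x * a) 1.
Arguments bs {gT}.

Section Main.
Variables (gT : finGroupType) (G : {group gT}) (p n : nat) (a : gT) (eta : {perm gT}).
Hypotheses (pr : prime p) (op : odd p) (aG : a \in G) (oa : #[a] = (p ^ n)%N)
  (eA : eta \in Aut G).
Local Notation A := <[a]>.
Local Notation N := (p ^ n)%N.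
Local Notation b := (bs eta a).

Lemma AG : A \subset G. Proof. by rewrite cycle_subG. Qed.
Lemma inAG x : x \in A -> x \in G. Proof. by move/(subsetP AG). Qed.

Lemma emul : {in G &, forall x y, eta (x * y) = eta x * eta y}.
Proof. exact/morphicP/Aut_morphic. Qed.

Lemma eta1 : eta 1 = 1.
Proof.
have := @emul 1 1 (group1 G) (group1 G); rewrite mulg1 => h.
by apply: (mulgI (eta 1)); rewrite mulg1 -h.
Qed.

Lemma etaX x i : x \in G -> eta (x ^+ i) = eta x ^+ i.
Proof.
move=> xG; elim: i => [|i IH]; first by rewrite !expg0 eta1.
by rewrite !expgS emul ?groupX // IH.
Qed.

Lemma NP : 0 < N. Proof. by rewrite expn_gt0 prime_gt0. Qed.

Section R.
Variable w0 : nat.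
Hypothesis Hr : eta a = a ^+ (1 + p * w0).
Let r := (1 + p * w0)%N.

Lemma bsE k : b k = a ^+ (sq r k).
Proof.
elim: k => [|k IH] //=.
rewrite /bs /= -/(bs eta a k) IH etaX // Hr -expgM.
by rewrite addn1 expgSr.
Qed.

Lemma bsA k : b k \in A. Proof. by rewrite bsE mem_cycle. Qed.

Lemma bsN : b N = 1.
Proof. by apply/eqP; rewrite bsE -order_dvdn oa; apply: L2a. Qed.

Lemma bsNq q : b (q * N) = 1.
Proof.
elim: q => [|q IH]; first by rewrite mul0n.
by rewrite mulSn /bs iterD -/(bs eta a (q * N)) IH -/(bs eta a N) bsN.
Qed.

Lemma bs_mod k : b k = b (k %% N).
Proof.
by rewrite {1}(divn_eq k N) addnC /bs iterD -/(bs eta a _) bsNq.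
Qed.

Lemma coprNr i : coprime N (r ^ i).
Proof.
apply: coprimeXr; apply: coprimeXl; rewrite prime_coprime //.
by rewrite /r dvdn_addl ?dvdn_mulr // dvdn1; case: eqP pr => // ->.
Qed.

Lemma bs_inj i j : i < N -> j < N -> b i = b j -> i = j.
Proof.
wlog ij : i j / i <= j.
  move=> H iN jN e; case: (leqP i j) => [|/ltnW] h; first exact: H.
  by apply/esym/H.
move=> iN jN; rewrite !bsE => /eqP; rewrite eq_expg_mod_order oa eq_sym.
rewrite -(subnK ij) sqD -{2}(add0n (sq r i)) eqn_modDr mod0n.
rewrite -/(dvdn _ _) Gauss_dvdr ?coprNr // => /(@Pdvd p r n w0 pr op erefl) H.
have : j - i < N by rewrite (leq_ltn_trans (leq_subr _ _)).
case: (j - i) H => [|d] H; first by rewrite add0n.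
by rewrite ltnNge dvdn_leq.
Qed.

Lemma bs_surj x : x \in A -> exists2 k, k < N & b k = x.
Proof.
move=> xA.
have inj : injective (fun k : 'I_N => b k).
  by move=> i j /bs_inj e; apply/val_inj/e.
have : [set b k | k : 'I_N] == A.
  rewrite eqEcard; apply/andP; split.
    by apply/subsetP => y /imsetP [k _ ->]; apply: bsA.
  by rewrite card_imset // card_ord -orderE oa.
move/eqP => E; move: xA; rewrite -E => /imsetP [k _ ->].
by exists k.
Qed.

End R.

Lemma aut1 (f : {perm gT}) : f \in Aut G -> f 1 = 1.
Proof.
move=> fA; have := morphicP (Aut_morphic fA) 1 1 (group1 G) (group1 G).
by rewrite mulg1 => h; apply: (mulgI (f 1)); rewrite mulg1 -h.
Qed.

Section Gam.
Variable gamma : gT -> {perm gT}.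
Hypotheses (Hg : rel_gamma G A gamma) (ga : gamma a = eta).

Lemma etaA x : x \in A -> eta x \in A.
Proof. by case: Hg => _ _ H3 xA; rewrite -ga H3 // cycle_id. Qed.

Lemma gam1 : gamma 1 = 1.
Proof.
case: Hg => H1 H2 _; have := H2 1 1 (group1 _) (group1 _).
rewrite aut1 ?H1 // mulg1 => h.
by apply: (mulgI (gamma 1)); rewrite mulg1 -h.
Qed.

Lemma bsA' k : b k \in A.
Proof.
elim: k => [|k IH]; first exact: group1.
by rewrite /bs /= -/(bs eta a k) groupM ?etaA ?cycle_id.
Qed.

Lemma gam_bs k : gamma (b k) = eta ^+ k.
Proof.
elim: k => [|k IH]; first by rewrite expg0 gam1.
case: Hg => _ H2 _.
by rewrite /bs /= -/(bs eta a k) -{1}ga H2 ?bsA' ?cycle_id // IH ga expgSr.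
Qed.

Lemma partI : eta @: A \subset A /\ (#[eta] %| N)%N.
Proof.
split; first by apply/subsetP => y /imsetP [x xA ->]; apply: etaA.
have /cycleP [r er] := etaA _ (cycle_id a).
set r' := (r + N)%N.
have er' : eta a = a ^+ r' by rewrite er expgD -oa expg_order mulg1.
have r'0 : 0 < r' by rewrite addn_gt0 NP orbT.
case: (boolP (p %| r'.-1)) => [/dvdnP [w0 hw]|nd].
  have Hr : eta a = a ^+ (1 + p * w0).
    by rewrite er' -(prednK r'0) hw -addn1 addnC mulnC.
  by rewrite order_dvdn -gam_bs (bsN _ Hr) gam1.
have cp : coprime #|A| r'.-1 by rewrite -orderE oa coprimeXl // prime_coprime.
set k := r'.-1 in cp nd.
set c := (a^-1) ^+ expg_invn A k.
have cA : c \in A by rewrite groupX ?groupV ?cycle_id.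
have ck : c ^+ k = a^-1 by rewrite /c expgnAC expgK ?groupV ?cycle_id.
have [i ci] := cycleP _ _ cA.
have ec : eta c = c ^+ r' by rewrite ci etaX ?groupX // er' -!expgM mulnC.
have fx : gamma a c * a = c.
  rewrite ga ec -(prednK r'0) expgSr -/k ck ci -mulgA -expgSr expgS.
  by rewrite mulKg.
case: Hg => _ H2 _.
have := H2 c a cA (cycle_id a); rewrite fx => h.
have g1 : gamma a = 1 by apply: (mulgI (gamma c)); rewrite mulg1 -h.
by rewrite -ga g1 order1 dvd1n.
Qed.

End Gam.

Section Ex.
Hypotheses (Hinv : eta @: A \subset A) (Hord : (#[eta] %| N)%N).

Lemma r_exists : exists w0, eta a = a ^+ (1 + p * w0).
Proof.
have /cycleP [r er] : eta a \in A.
  by apply: (subsetP Hinv); apply: imset_f; apply: cycle_id.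
have [n0|npos] := posnP n.
  have : #[a] == 1%N by rewrite oa n0.
  rewrite order_eq1 => /eqP a1; exists 0%N.
  by rewrite a1 eta1 expg1n.
have etN : eta ^+ N = 1 by apply/eqP; rewrite -order_dvdn.
have ek k : (eta ^+ k) a = a ^+ (r ^ k).
  elim: k => [|k IH]; first by rewrite expg0 perm1 expn0 expg1.
  by rewrite expgSr permM IH etaX // er -expgM expnS.
have : a ^+ (r ^ N) = a ^+ 1 by rewrite -ek etN perm1 expg1.
move/eqP; rewrite eq_expg_mod_order oa => /eqP h.
have pN : p %| N by apply: dvdn_exp.
have hp : r ^ N %% p = 1 %% p by rewrite -(modn_dvdm _ pN) h modn_dvdm.
have F k : r ^ (p ^ k) = r %[mod p].
  elim: k => [|k IH]; first by rewrite expn0 expn1.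
  by rewrite expnSr expnM fermat_little.
rewrite F (modn_small (prime_gt1 pr)) in hp.
by exists (r %/ p); rewrite er {1}(divn_eq r p) hp addnC mulnC.
Qed.

Lemma etaXA j x : x \in A -> (eta ^+ j) x \in A.
Proof.
move=> xA; elim: j => [|j IH]; first by rewrite expg0 perm1.
rewrite expgSr permM; apply: (subsetP Hinv); exact: imset_f.
Qed.

Lemma existence : exists gamma, rel_gamma G A gamma /\ gamma a = eta.
Proof.
have [w0 Hr] := r_exists.
have etN : eta ^+ N = 1 by apply/eqP; rewrite -order_dvdn.
pose gam x := if [pick k : 'I_N | b k == x] is Some k then eta ^+ k else 1.
have gamE k : gam (b k) = eta ^+ k.
  rewrite /gam; case: pickP => [k' /eqP e | H].
    rewrite (bs_mod _ Hr k) in e.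
    rewrite (bs_inj _ Hr _ _ (ltn_ord k') (ltn_pmod k NP) e).
    by rewrite {2}(divn_eq k N) expgD mulnC expgM etN expg1n mul1g.
  by have := H (Ordinal (ltn_pmod k NP)); rewrite /= -(bs_mod _ Hr) eqxx.
have bij i j : (eta ^+ j) (b i) * b j = b (i + j).
  elim: j => [|j IH]; first by rewrite expg0 perm1 mulg1 addn0.
  rewrite addnS /bs /= -/(bs eta a j) -/(bs eta a (i + j)) -IH.
  rewrite expgSr permM mulgA emul //; apply: inAG; last exact: bsA _ Hr _.
  by apply: etaXA; apply: bsA _ Hr _.
exists gam; split; last first.
  have -> : a = b 1 by rewrite /bs /= eta1 mul1g.
  by rewrite gamE expg1.
split.
- move=> x /(bs_surj _ Hr) [k _ <-]; rewrite gamE; exact: groupX.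
- move=> g h /(bs_surj _ Hr) [i _ <-] /(bs_surj _ Hr) [j _ <-].
  by rewrite !gamE bij gamE expgD.
- move=> x y xA /(bs_surj _ Hr) [j _ <-]; rewrite gamE; exact: etaXA.
Qed.

End Ex.

Lemma uniq_gam g1 g2 : rel_gamma G A g1 -> g1 a = eta ->
  rel_gamma G A g2 -> g2 a = eta -> {in A, g1 =1 g2}.
Proof.
move=> H1 e1 H2 e2 x xA.
have [Hinv Hord] := @partI g1 H1 e1.
have [w0 Hr] := r_exists Hinv Hord.
have [k _ <-] := bs_surj _ Hr _ xA.
by rewrite (@gam_bs g1 H1 e1) (@gam_bs g2 H2 e2).
Qed.

Lemma main_sec :
  ((exists gamma : gT -> {perm gT},
       rel_gamma G <[a]> gamma /\ gamma a = eta)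
   <-> (eta @: <[a]> \subset <[a]>) /\ (#[eta] %| p ^ n)%N)
  /\ (forall gamma1 gamma2 : gT -> {perm gT},
        rel_gamma G <[a]> gamma1 -> gamma1 a = eta ->
        rel_gamma G <[a]> gamma2 -> gamma2 a = eta ->
        {in <[a]>, gamma1 =1 gamma2}).
Proof using pr op aG oa eA.
split; last exact: uniq_gam.
split; first by case=> g [Hg ga]; exact: (@partI g Hg ga).
by case=> Hinv Hord; apply: existence.
Qed.

End Main.

Theorem mainTheorem9 (gT : finGroupType) (G : {group gT}) (p n : nat)
  (a : gT) (eta : {perm gT}) :
  prime p -> odd p -> a \in G -> #[a] = (p ^ n)%N -> eta \in Aut G ->
  ((exists gamma : gT -> {perm gT},
       rel_gamma G <[a]> gamma /\ gamma a = eta)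
   <-> (eta @: <[a]> \subset <[a]>) /\ (#[eta] %| p ^ n)%N)
  /\ (forall gamma1 gamma2 : gT -> {perm gT},
        rel_gamma G <[a]> gamma1 -> gamma1 a = eta ->
        rel_gamma G <[a]> gamma2 -> gamma2 a = eta ->
        {in <[a]>, gamma1 =1 gamma2}).
Proof.
move=> pr op aG oa eA; exact: (@main_sec gT G p n a eta pr op aG oa eA).
Qed.
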